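(* Let $K>1$, $d\ge1$, and $\alpha_1,\dots,\alpha_K>0$. For $k=1,\dots,K$ let $p_0^{(k)}=\mathcal{N}({\bm{0}},\alpha_k{\bm{I}}_d)$, and let $p_0=\mathrm{PoE}(p_0^{(1)},\dots,p_0^{(K)})$. For any initial distribution $q_0$, denote by $q_t$ the law at time $t$ of the solution of the forward VP SDE started from $q_0$. Then for each $t\in(0,T]$, $$p_t=\mathrm{PoE}(p_t^{(1)},\dots,p_t^{(K)})$$ if and only if $\alpha_1=\dots=\alpha_K$.
   Context: Product of Experts: for probability densities $p^{(1)},\dots,p^{(K)}$ on $\mathbb{R}^d$, $\mathrm{PoE}(p^{(1)},\dots,p^{(K)})({\mathbf{x}})=\sqrt[K]{p^{(1)}({\mathbf{x}})\cdots p^{(K)}({\mathbf{x}})}\,/\,Z_K$ with $Z_K=\int\sqrt[K]{p^{(1)}({\mathbf{z}})\cdots p^{(K)}({\mathbf{z}})}\,\mathrm{d}{\mathbf{z}}$ (the normalized geometric mean). Forward VP SDE: $\mathrm{d}{\mathbf{z}}_t=-\beta_t{\mathbf{z}}_t\,\mathrm{d}t+\sqrt{2\beta_t}\,\mathrm{d}{\mathbf{w}}_t$ on $[0,T]$, ${\mathbf{z}}_0\sim q_0$, with a positive variance schedule $\beta_t$ and standard Wiener process ${\mathbf{w}}_t$; its strong solution is ${\mathbf{z}}_t=\gamma_t{\mathbf{z}}_0+\eta_t$ with deterministic $\gamma_t\in(0,1)$ for $t>0$ and Gaussian $\eta_t$ independent of ${\mathbf{z}}_0$, such that if ${\mathbf{z}}_0\sim\mathcal{N}({\bm{0}},{\bm{\Sigma}})$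 then ${\mathbf{z}}_t\sim\mathcal{N}({\bm{0}},\gamma_t{\bm{\Sigma}}+(1-\gamma_t){\bm{I}})$. Here $p_t^{(k)}$ and $p_t$ are obtained by this diffusion from $p_0^{(k)}$ and $p_0$ respectively, and equality means equality of distributions. *)

(* Defs.v *)
From HB Require Import structures.
From mathcomp Require Import all_boot all_order all_algebra.
From mathcomp Require Import all_classical all_reals all_analysis.
Set Implicit Arguments. Unset Strict Implicit. Unset Printing Implicit Defensive.
Import Order.TTheory GRing.Theory Num.Theory.
Local Open Scope classical_set_scope.
Local Open Scope ring_scope.

Section PoEDefs.
Variable R : realType.

Definition sqnorm (d : nat) (x : 'rV[R]_d) : R := \sum_(i < d) (x ord0 i) ^+ 2.

(* Lebesgue integral on R^d of a nonnegative (extended-real valued) function,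
   defined as the iterated one-dimensional Lebesgue integral (Tonelli). *)
Fixpoint intRd (d : nat) : ('rV[R]_d -> \bar R) -> \bar R :=
  match d return ('rV[R]_d -> \bar R) -> \bar R with
  | 0 => fun f => f 0
  | d'.+1 => fun f =>
      (\int[@lebesgue_measure R]_x
         intRd (fun v : 'rV[R]_d' => f (row_mx (\row_(i < 1) x) v)))%E
  end.

Definition gauss_density (d : nat) (v : R) (x : 'rV[R]_d) : R :=
  (2 * pi * v) `^ (- (d%:R / 2)) * expR (- sqnorm x / (2 * v)).

Definition geo_mean (d K : nat) (p : 'I_K -> 'rV[R]_d -> R) (x : 'rV[R]_d) : R :=
  (\prod_(k < K) p k x) `^ (K%:R)^-1.

Definition PoE (d K : nat) (p : 'I_K -> 'rV[R]_d -> R) (x : 'rV[R]_d) : R :=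
  geo_mean p x / fine (intRd (fun z => (geo_mean p z)%:E)).

(* Scaling factor of the strong solution of the forward VP SDE
   dz = -beta_t z dt + sqrt(2 beta_t) dw :  z_t = a_t z_0 + eta_t,
   a_t = exp(-int_0^t beta), eta_t ~ N(0, (1 - a_t^2) I) independent of z_0. *)
Definition vp_scale (beta : R -> R) (t : R) : R :=
  expR (- Rintegral (@lebesgue_measure R) `[0, t] beta).

(* Density at time t of the forward VP diffusion started from density q0:
   the law of a_t Z_0 + eta_t, i.e. x |-> int q0(y) N(x; a_t y, (1-a_t^2) I) dy. *)
Definition vp_diffuse (d : nat) (beta : R -> R) (t : R)
    (q0 : 'rV[R]_d -> R) (x : 'rV[R]_d) : R :=
  let a := vp_scale beta t in
  fine (intRd (fun y => (q0 y * gauss_density (1 - a ^+ 2) (x - a *: y))%:E)).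

End PoEDefs.

(* Main.v *)
Require Import Defs.
From HB Require Import structures.
From mathcomp Require Import all_boot all_order all_algebra.
From mathcomp Require Import all_classical all_reals all_analysis.
From mathcomp Require Import ring lra measurable_realfun.
Import Order.TTheory GRing.Theory Num.Theory.
Import numFieldNormedType.Exports.
Local Open Scope classical_set_scope.
Local Open Scope ring_scope.

Definition g1 (R : realType) (v x : R) : R :=
  expR (- (2^-1 * ln (2 * pi * v)) - x ^+ 2 / (2 * v)).

Arguments g1 {R}.

Lemma g1_ge0 (R : realType) (v x : R) : 0 <= g1 v x.
Proof. exact: expR_ge0. Qed.

Lemma gaussE (R : realType) (d : nat) (v : R) (y : 'rV[R]_d) : 0 < v ->
  gauss_density v y = \prod_(i < d) g1 v (y ord0 i).
Proof.
move=> v0; rewrite /gauss_density /g1 -expR_sum /powR.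
have -> : (2 * pi * v == 0) = false by apply/negbTE; rewrite gt_eqF // !mulr_gt0 // pi_gt0.
rewrite -expRD; congr expR.
rewrite sumrB sumr_const card_ord /sqnorm -mulr_suml.
rewrite -mulr_natl; set L := ln _; set S := \sum_(i < d) _.
ring.
Qed.

Lemma intRd_prod (R : realType) (d : nat) : forall (k : R) (f : 'I_d -> R -> R) (c : 'I_d -> R),
  0 <= k -> (forall i x, 0 <= f i x) -> (forall i, measurable_fun setT (f i)) ->
  (forall i, (\int[@lebesgue_measure R]_x (f i x)%:E)%E = (c i)%:E) ->
  intRd (fun y : 'rV[R]_d => (k * \prod_(i < d) f i (y ord0 i))%:E) = (k * \prod_(i < d) c i)%:E.
Proof.
elim: d => [|d IH] k f c k0 f0 mf fc.
  by rewrite /= !big_ord0.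
have c0 i : 0 <= c i.
  rewrite -lee_fin -fc; apply: integral_ge0 => x _; rewrite lee_fin; exact: f0.
rewrite /=.
transitivity (\int[@lebesgue_measure R]_x ((k * \prod_(i < d) c (lift ord0 i))%:E * (f ord0 x)%:E))%E.
  apply: eq_integral => x _.
  rewrite (_ : (fun v => _) = (fun v : 'rV[R]_d =>
     ((k * f ord0 x) * \prod_(i < d) f (lift ord0 i) (v ord0 i))%:E)).
    rewrite (IH (k * f ord0 x) (fun i => f (lift ord0 i)) (fun i => c (lift ord0 i))) //; first by rewrite -EFinM; congr EFin; ring.
    by rewrite mulr_ge0.
  apply/funext => v; rewrite big_ord_recl; congr EFin.
  have -> : (row_mx (\row_(i < 1) x) v) ord0 ord0 = x.
    by rewrite (_ : ord0 = lshift d (ord0 : 'I_1)) ?row_mxEl ?mxE //; apply: ord_inj.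
  rewrite mulrA; congr (_ * _).
  apply: eq_bigr => i _.
  rewrite (_ : lift ord0 i = rshift 1 i); last by apply: ord_inj.
  by rewrite (row_mxEr (\row_(j < 1) x) v ord0 i).
rewrite ge0_integralZl //; last by rewrite lee_fin mulr_ge0 // prodr_ge0.
- by rewrite fc -EFinM big_ord_recl; congr EFin; ring.
- by apply/measurable_EFinP; exact: mf.
- by move=> x _; rewrite lee_fin.
Qed.

Lemma normal_pdf_exp (R : realType) (m s y : R) : 0 < s ->
  normal_pdf m s y = expR (- (2^-1 * ln (2 * pi * s ^+ 2)) - (y - m) ^+ 2 / (2 * s ^+ 2)).
Proof.
move=> s0; rewrite /normal_pdf gt_eqF // /normal_peak /normal_fun.
have e1 : s ^+ 2 * pi *+ 2 = 2 * pi * s ^+ 2 by rewrite -mulr_natl; ring.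
have e2 : s ^+ 2 *+ 2 = 2 * s ^+ 2 by rewrite -mulr_natl.
have p0 : 0 < 2 * pi * s ^+ 2 by rewrite !mulr_gt0 // ?pi_gt0 // exprn_gt0.
rewrite e1 e2 -powR12_sqrt ?ltW // -powRN /powR gt_eqF // -expRD; congr expR.
ring.
Qed.

Lemma g1_normal (R : realType) (v x : R) : 0 < v -> g1 v x = normal_pdf 0 (Num.sqrt v) x.
Proof.
move=> v0; rewrite normal_pdf_exp ?sqrtr_gt0 // sqr_sqrtr ?ltW // subr0.
by [].
Qed.

Lemma integral_g1 (R : realType) (v : R) : 0 < v ->
  (\int[@lebesgue_measure R]_x (g1 v x)%:E)%E = 1%E.
Proof.
move=> v0; under eq_integral do rewrite g1_normal //.
exact: integral_normal_pdf.
Qed.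

Lemma measurable_g1 (R : realType) (v : R) : 0 < v -> measurable_fun setT (g1 v).
Proof.
move=> v0; rewrite (_ : g1 v = normal_pdf 0 (Num.sqrt v)); last first.
  by apply/funext => x; rewrite g1_normal.
exact: measurable_normal_pdf.
Qed.

Lemma conv1 (R : realType) (h b a u : R) : 0 < h -> 0 < b ->
  (\int[@lebesgue_measure R]_y (g1 h y * g1 b (u - a * y))%:E)%E =
  (g1 (a ^+ 2 * h + b) u)%:E.
Proof.
move=> h0 b0; set V := a ^+ 2 * h + b.
have V0 : 0 < V by rewrite /V ltr_pwDr // mulr_ge0 // ?sqr_ge0 // ltW.
set m := a * h * u / V; set s := Num.sqrt (h * b / V).
have hbV : 0 < h * b / V by rewrite !mulr_gt0 // invr_gt0.
have s0 : 0 < s by rewrite sqrtr_gt0.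
have s2 : s ^+ 2 = h * b / V by rewrite sqr_sqrtr // ltW.
have pi0 := @pi_gt0 R.
have pt y : g1 h y * g1 b (u - a * y) = g1 V u * normal_pdf m s y.
  rewrite normal_pdf_exp // s2 /g1 -!expRD; congr expR.
  have HL : ln (2 * pi * h) + ln (2 * pi * b) = ln (2 * pi * V) + ln (2 * pi * (h * b / V)).
    rewrite -!lnM ?posrE ?mulr_gt0 ?invr_gt0 //; congr ln; field; exact: lt0r_neq0.
  have -> : ln (2 * pi * b) = ln (2 * pi * V) + ln (2 * pi * (h * b / V)) - ln (2 * pi * h) by rewrite -HL; ring.
  rewrite /m /V; field.
  by rewrite !gt_eqF.
under eq_integral do rewrite pt EFinM.
rewrite ge0_integralZl //.
- by rewrite integral_normal_pdf mule1.
- by apply/measurable_EFinP; exact: measurable_normal_pdf.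
- by move=> y _; rewrite lee_fin normal_pdf_ge0.
- by rewrite lee_fin g1_ge0.
Qed.

Lemma gauss_exp (R : realType) (d : nat) (v : R) (x : 'rV[R]_d) : 0 < v ->
  gauss_density v x = expR (- (d%:R / 2) * ln (2 * pi * v) - sqnorm x / (2 * v)).
Proof.
move=> v0; rewrite /gauss_density /powR gt_eqF ?mulr_gt0 ?pi_gt0 // -expRD.
congr expR; ring.
Qed.

Lemma gauss_ge0 (R : realType) (d : nat) (v : R) (x : 'rV[R]_d) : 0 < v -> 0 <= gauss_density v x.
Proof. by move=> v0; rewrite gauss_exp // expR_ge0. Qed.

Lemma intRd_gauss (R : realType) (d : nat) (C v : R) : 0 <= C -> 0 < v ->
  intRd (fun y : 'rV[R]_d => (C * gauss_density v y)%:E) = C%:E.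
Proof.
move=> C0 v0.
rewrite (_ : (fun y => _) = (fun y : 'rV[R]_d => (C * \prod_(i < d) g1 v (y ord0 i))%:E)); last first.
  by apply/funext => y; rewrite gaussE.
rewrite (@intRd_prod R d C (fun _ => g1 v) (fun _ => 1)) //.
- by rewrite big1 ?mulr1.
- by move=> _ x; exact: g1_ge0.
- by move=> _; exact: measurable_g1.
- by move=> _; exact: integral_g1.
Qed.

Lemma vp_gauss (R : realType) (d : nat) (beta : R -> R) (t h : R) (x : 'rV[R]_d) :
  0 < h -> 0 < 1 - (vp_scale beta t) ^+ 2 ->
  vp_diffuse beta t (gauss_density h) x =
  gauss_density ((vp_scale beta t) ^+ 2 * h + (1 - (vp_scale beta t) ^+ 2)) x.
Proof.
rewrite /vp_diffuse; set a := vp_scale beta t; set b := 1 - a ^+ 2 => h0 b0.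
rewrite (_ : (fun y => _) = (fun y : 'rV[R]_d =>
   (1 * \prod_(i < d) (g1 h (y ord0 i) * g1 b (x ord0 i - a * y ord0 i)))%:E)); last first.
  apply/funext => y; rewrite mul1r !gaussE // -big_split /=; congr EFin.
  by apply: eq_bigr => i _; rewrite !mxE.
rewrite (@intRd_prod R d 1 (fun i y => g1 h y * g1 b (x ord0 i - a * y))
   (fun i => g1 (a ^+ 2 * h + b) (x ord0 i))) //=.
- by rewrite mul1r gaussE // ltr_pwDr // mulr_ge0 // ?sqr_ge0 // ltW.
- by move=> i y; rewrite mulr_ge0 ?g1_ge0.
- move=> i; apply: measurable_funM; first exact: measurable_g1.
  apply: (measurableT_comp (f := g1 b) (g := fun y => x ord0 i - a * y)); first exact: measurable_g1.
  by apply: measurable_funB => //; exact: measurable_funM.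
- by move=> i; exact: conv1.
Qed.

Lemma sum_pos (R : realType) (K : nat) (F : 'I_K -> R) :
  (0 < K)%N -> (forall k, 0 < F k) -> 0 < \sum_(k < K) F k.
Proof.
case: K F => [//|K] F _ F0; rewrite big_ord_recl.
have := F0 ord0; have : 0 <= \sum_(i < K) F (lift ord0 i).
  by apply: sumr_ge0 => i _; exact: ltW.
lra.
Qed.

Definition Hm (R : realType) (K : nat) (w : 'I_K -> R) : R :=
  K%:R / \sum_(k < K) (w k)^-1.

Arguments Hm {R K}.

Lemma Hm_gt0 (R : realType) (K : nat) (w : 'I_K -> R) :
  (0 < K)%N -> (forall k, 0 < w k) -> 0 < Hm w.
Proof.
move=> K0 w0; rewrite /Hm divr_gt0 ?ltr0n //.
by apply: sum_pos => // k; rewrite invr_gt0.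
Qed.

Lemma geo_gauss (R : realType) (d K : nat) (w : 'I_K -> R) :
  (0 < K)%N -> (forall k, 0 < w k) ->
  exists2 C : R, 0 < C & forall x : 'rV[R]_d,
    geo_mean (fun k => gauss_density (w k)) x = C * gauss_density (Hm w) x.
Proof.
move=> K0 w0.
set A := \sum_(k < K) (- (d%:R / 2) * ln (2 * pi * w k)).
set S := \sum_(k < K) (w k)^-1.
have S0 : 0 < S by apply: sum_pos => // k; rewrite invr_gt0.
have H0 := @Hm_gt0 R K w K0 w0.
exists (expR (A / K%:R + d%:R / 2 * ln (2 * pi * Hm w))); first exact: expR_gt0.
move=> x; rewrite /geo_mean.
rewrite (eq_bigr (fun k => expR (- (d%:R / 2) * ln (2 * pi * w k) - sqnorm x / (2 * w k)))); last first.
  by move=> k _; rewrite gauss_exp.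
rewrite -expR_sum -expRM gauss_exp // -expRD; congr expR.
rewrite sumrB -/A.
rewrite (eq_bigr (fun k => sqnorm x / 2 * (w k)^-1)); last first.
  by move=> k _; rewrite invfM mulrA.
rewrite -mulr_sumr -/A -/S /Hm -/S.
field.
apply/andP; split; [exact: lt0r_neq0 | by rewrite pnatr_eq0 -lt0n].
Qed.

Lemma PoE_gauss (R : realType) (d K : nat) (w : 'I_K -> R) (x : 'rV[R]_d) :
  (0 < K)%N -> (forall k, 0 < w k) ->
  PoE (fun k => gauss_density (w k)) x = gauss_density (Hm w) x.
Proof.
move=> K0 w0; have [C C0 HC] := @geo_gauss R d K w K0 w0.
rewrite /PoE HC.
rewrite (_ : (fun z => _) = (fun z : 'rV[R]_d => (C * gauss_density (Hm w) z)%:E)); last first.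
  by apply/funext => z; rewrite HC.
rewrite intRd_gauss ?ltW ?Hm_gt0 //=.
by rewrite mulrC mulrA mulVf ?mul1r // lt0r_neq0.
Qed.

Lemma harm (R : realType) (K : nat) (al : 'I_K -> R) (p b : R) :
  (0 < K)%N -> (forall k, 0 < al k) -> 0 < p -> 0 < b ->
  p * Hm al + b = Hm (fun k => p * al k + b) -> forall i j, al i = al j.
Proof.
move=> K0 al0 p0 b0 E.
pose t k := (p * al k)^-1.
have t0 k : 0 < t k by rewrite invr_gt0 mulr_gt0.
set S := \sum_(k < K) t k.
have S0 : 0 < S by apply: sum_pos.
have KR0 : (K%:R : R) != 0 by rewrite pnatr_eq0 -lt0n.
set m := S / K%:R.
have m0 : 0 < m by rewrite divr_gt0 ?ltr0n.
set c := 1 + b * m.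
have c0 : 0 < c by have := mulr_gt0 b0 m0; rewrite /c; lra.
pose D k := b * (t k - m) ^+ 2 / (c ^+ 2 * (1 + b * t k)).
have D0 k : 0 <= D k.
  have h1 : 0 < 1 + b * t k by have := mulr_gt0 b0 (t0 k); lra.
  rewrite /D divr_ge0 //; first by rewrite mulr_ge0 ?sqr_ge0 ?ltW.
  by rewrite mulr_ge0 ?sqr_ge0 ?ltW.
have Sa : \sum_(k < K) (al k)^-1 = p * S.
  rewrite /S mulr_sumr; apply: eq_bigr => k _; rewrite /t.
  by field; rewrite !lt0r_neq0.
have Sc : \sum_(k < K) (p * al k + b)^-1 = K%:R * (m / c) - \sum_(k < K) D k.
  rewrite (eq_bigr (fun k => m / c + (t k - m) / c ^+ 2 - D k)); last first.
    move=> k _; rewrite /D /t /c /m; field.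
    have h1 := al0 k; have h2 : 0 < 1 + b * (p * al k)^-1 by rewrite addr_gt0 ?mulr_gt0 ?invr_gt0 ?mulr_gt0.
    have h3 : 0 < p * al k + b by rewrite addr_gt0 ?mulr_gt0.
    have h4 : 0 < K%:R + b * S by rewrite addr_gt0 ?ltr0n ?mulr_gt0.
    apply/and5P; split => //; apply: lt0r_neq0 => //; exact: mulr_gt0.
  rewrite sumrB big_split /= sumr_const card_ord -mulr_suml sumrB sumr_const card_ord.
  rewrite -/S (_ : S = K%:R * m); last by rewrite /m; field.
  rewrite mulr_natl; ring.
have Sc0 : 0 < \sum_(k < K) (p * al k + b)^-1.
  by apply: sum_pos => // k; rewrite invr_gt0 addr_gt0 ?mulr_gt0.
have E2 : K%:R / \sum_(k < K) (p * al k + b)^-1 = c / m.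
  rewrite -[LHS]E /Hm Sa /c /m; field.
  by rewrite KR0 /= (lt0r_neq0 S0) (lt0r_neq0 p0).
have E3 : c / m * \sum_(k < K) (p * al k + b)^-1 = K%:R.
  by rewrite -E2 divfK // lt0r_neq0.
have SD : \sum_(k < K) D k = 0.
  move: E3; rewrite Sc => E3.
  have : c / m * \sum_(k < K) D k = 0.
    have -> : c / m * \sum_(k < K) D k = K%:R - c / m * (K%:R * (m / c) - \sum_(k < K) D k).
      by field; rewrite !lt0r_neq0.
    by rewrite E3 subrr.
  have cm0 : c / m != 0 by apply: lt0r_neq0; rewrite divr_gt0.
  by move/eqP; rewrite mulf_eq0 (negbTE cm0) /= => /eqP.
have tm k : t k = m.
  have Dk : D k = 0 by apply: (psumr_eq0P _ SD) => // j _; exact: D0.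
  have h1 : 0 < 1 + b * t k by have := mulr_gt0 b0 (t0 k); lra.
  have hden : c ^+ 2 * (1 + b * t k) != 0.
    by apply: lt0r_neq0; rewrite mulr_gt0 ?exprn_gt0.
  move: Dk; rewrite /D => /eqP; rewrite mulf_eq0 invr_eq0 (negbTE hden) orbF.
  by rewrite mulf_eq0 (negbTE (lt0r_neq0 b0)) /= sqrf_eq0 subr_eq0 => /eqP.
move=> i j.
have : t i = t j by rewrite !tm.
rewrite /t => /invr_inj /mulfI; apply; exact: lt0r_neq0.
Qed.

Lemma vp_scale_lt1 (R : realType) (beta : R -> R) (T t : R) :
  {within `[0, T], continuous beta} ->
  (forall s, 0 <= s <= T -> 0 < beta s) -> 0 < t <= T ->
  0 < 1 - (vp_scale beta t) ^+ 2.
Proof.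
move=> cb bpos /andP[t0 tT].
have sub : `[0, t] `<=` `[0, T].
  move=> x /=; rewrite !in_itv /= => /andP[x0 xt]; rewrite x0 /=.
  exact: le_trans xt tT.
have ct : {within `[0, t], continuous beta} := continuous_subspaceW sub cb.
have [c cI cmin] := EVT_min (ltW t0) ct.
have bc : 0 < beta c.
  apply: bpos; move: cI; rewrite in_itv /= => /andP[c0 ct'].
  by rewrite c0 /=; exact: le_trans ct' tT.
have ib := continuous_compact_integrable (@segment_compact _ 0 t) ct.
have mb : measurable_fun `[0, t] (EFin \o beta) := measurable_int _ ib.
have fin := integrable_fin_num _ ib.
have le1 : (\int[@lebesgue_measure R]_(x in `[0%R, t]) (cst (beta c)%:E) x <=
            \int[@lebesgue_measure R]_(x in `[0%R, t]) (beta x)%:E)%E.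
  apply: ge0_le_integral => //. by move=> x _; rewrite lee_fin ltW.
rewrite integral_cst // in le1.
have le2 : ((beta c * t)%:E <= \int[@lebesgue_measure R]_(x in `[0%R, t]) (beta x)%:E)%E.
  have mt : (lebesgue_measure (`[0%R, t]%classic : set R) = t%:E)%E.
    by rewrite lebesgue_measure_itv /= lte_fin t0 oppr0 adde0.
  by apply: le_trans le1; rewrite EFinM -mt.
have fin' := fin (measurable_itv _).
have I0 : 0 < Rintegral (@lebesgue_measure R) `[0, t] beta.
  rewrite /Rintegral; apply: lt_le_trans (mulr_gt0 bc t0) _.
  by rewrite -lee_fin fineK.
rewrite /vp_scale; set I := Rintegral _ _ _ in I0 *.
have a0 : 0 < expR (- I) := expR_gt0 _.
have a1 : expR (- I) < 1 by rewrite expR_lt1 oppr_lt0.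
nra.
Qed.

Lemma gauss_inj (R : realType) (d : nat) (v1 v2 : R) : (0 < d)%N -> 0 < v1 -> 0 < v2 ->
  gauss_density v1 (0 : 'rV[R]_d) = gauss_density v2 (0 : 'rV[R]_d) -> v1 = v2.
Proof.
move=> d0 h1 h2; rewrite !gauss_exp //.
have -> : sqnorm (0 : 'rV[R]_d) = 0 by rewrite /sqnorm big1 // => i _; rewrite mxE expr0n.
rewrite !mul0r !subr0 => /expR_inj.
have dn : - (d%:R / 2) != 0 :> R.
  by rewrite oppr_eq0; apply: lt0r_neq0; rewrite divr_gt0 ?ltr0n.
move/(mulfI dn) => e.
have p1 : 0 < 2 * pi * v1 by rewrite !mulr_gt0 ?pi_gt0.
have p2 : 0 < 2 * pi * v2 by rewrite !mulr_gt0 ?pi_gt0.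
have e2 : 2 * pi * v1 = 2 * pi * v2 by apply: ln_inj; rewrite ?posrE.
have n0 : 2 * pi != 0 :> R by rewrite mulf_neq0 // lt0r_neq0 ?pi_gt0.
by apply: (mulfI n0).
Qed.

Lemma Hm_const (R : realType) (K : nat) (w : 'I_K -> R) (c : R) :
  (0 < K)%N -> c != 0 -> (forall k, w k = c) -> Hm w = c.
Proof.
move=> K0 c0 wc; rewrite /Hm (eq_bigr (fun _ => c^-1)) ?sumr_const ?card_ord //.
rewrite -[c^-1 *+ K]mulr_natl invfM invrK mulrA mulfV ?mul1r // pnatr_eq0 -lt0n //.
by move=> i _; rewrite wc.
Qed.

Theorem proposition4 (R : realType) (K d : nat) (alpha : 'I_K -> R)
    (beta : R -> R) (T : R) :
  (1 < K)%N -> (1 <= d)%N -> (forall k, 0 < alpha k) ->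
  0 < T -> {within `[0, T], continuous beta} ->
  (forall s, 0 <= s <= T -> 0 < beta s) ->
  forall t, 0 < t <= T ->
  ((forall x : 'rV[R]_d,
      vp_diffuse beta t (PoE (fun k => @gauss_density R d (alpha k))) x =
      PoE (fun k => vp_diffuse beta t (@gauss_density R d (alpha k))) x)
   <-> (forall i j, alpha i = alpha j)).
Proof.
move=> K1 d1 al0 T0 cb bpos t tI.
have K0 : (0 < K)%N by apply: ltn_trans K1.
have b0 := @vp_scale_lt1 R beta T t cb bpos tI.
set a := vp_scale beta t in b0 *.
set b := 1 - a ^+ 2 in b0 *.
have p0 : 0 < a ^+ 2 by rewrite exprn_gt0 // /a /vp_scale expR_gt0.
have w0 k : 0 < a ^+ 2 * alpha k + b by rewrite addr_gt0 // mulr_gt0.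
have LHS x : vp_diffuse beta t (PoE (fun k => @gauss_density R d (alpha k))) x =
             gauss_density (a ^+ 2 * Hm alpha + b) x.
  rewrite (_ : PoE _ = gauss_density (Hm alpha)); last first.
    by apply/funext => y; rewrite PoE_gauss.
  by rewrite vp_gauss // Hm_gt0.
have RHS x : PoE (fun k => vp_diffuse beta t (@gauss_density R d (alpha k))) x =
             gauss_density (Hm (fun k => a ^+ 2 * alpha k + b)) x.
  rewrite (_ : (fun k => _) = (fun k => gauss_density (a ^+ 2 * alpha k + b))); last first.
    by apply/funext => k; apply/funext => y; rewrite vp_gauss.
  by rewrite PoE_gauss.
have H1 : 0 < a ^+ 2 * Hm alpha + b by rewrite addr_gt0 // mulr_gt0 // Hm_gt0.
have H2 : 0 < Hm (fun k => a ^+ 2 * alpha k + b) by rewrite Hm_gt0.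
split.
- move=> E; apply: (@harm R K alpha (a ^+ 2) b K0 al0 p0 b0).
  apply: (@gauss_inj R d _ _ d1 H1 H2).
  by rewrite -LHS -RHS E.
- move=> E x; rewrite LHS RHS; congr gauss_density.
  pose i0 := Ordinal K0.
  have e1 : Hm alpha = alpha i0.
    by apply: (@Hm_const R K alpha (alpha i0) K0 (lt0r_neq0 (al0 i0))) => k; rewrite (E k i0).
  have e2 : Hm (fun k => a ^+ 2 * alpha k + b) = a ^+ 2 * alpha i0 + b.
    apply: (@Hm_const R K _ _ K0 (lt0r_neq0 (w0 i0))) => k.
    by rewrite (E k i0).
  by rewrite e1 e2.
Qed.
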